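(* Let $G$ be an additive abelian group and let $S\subseteq G$ be a pointed reflection subspace of $G$. (i)(a) For every subset $T\subseteq S$, the set $S_T:=S\cap\langle T\rangle$ is a pointed reflection subspace of the group $\langle T\rangle$. In particular, if $G$ is torsion free and $T$ is finite, then $S_T$ is a semilattice in $\langle T\rangle$. (i)(b) Let $\mathcal M_S$ denote the set of all finite subsets of $S$, directed by inclusion. Then $S$ is the direct union of the family $\{S_T\}_{T\in\mathcal M_S}$. (ii) Let $\mathcal S$ be a family of subsets of $G$ which is a directed set under inclusion, such that each $S'\in\mathcal S$ is a pointed reflection subspace of its $\mathbb Z$-span $\langle S'\rangle$ in $G$. If $G=\bigcup_{S'\in\mathcal S}\langle S'\rangle$, then the direct union $\bigcup_{S'\in\mathcal S}S'$ is a pointed reflection subspace of $G$.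
   Context: For a subset $X$ of an abelian group, $\langle X\rangle$ denotes the subgroup generated by $X$. A symmetric reflection subspace of an abelian group $H$ is a subset $S\subseteq H$ with $\langle S\rangle=H$ and $S-2S\subseteq S$; it is a pointed reflection subspace if moreover $0\in S$. If $H$ is free abelian of finite rank, a pointed reflection subspace of $H$ is called a semilattice in $H$. A set $C$ is the direct union of a family $\{C_i\}_{i\in I}$ of subsets of $C$, directed under inclusion, if $C=\bigcup_{i\in I}C_i$. *)

(* Defs.v *)
From HB Require Import structures.
From mathcomp Require Import all_boot all_order all_algebra.
From mathcomp Require Import boolp classical_sets cardinality.
Set Implicit Arguments. Unset Strict Implicit. Unset Printing Implicit Defensive.
Import GRing.Theory.
Local Open Scope ring_scope.
Local Open Scope classical_set_scope.

Inductive gen {G : zmodType} (X : set G) : G -> Prop :=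
  | gen_base x : X x -> gen X x
  | gen_zero : gen X 0
  | gen_sub x y : gen X x -> gen X y -> gen X (x - y).

Definition sym_refl_subspace {G : zmodType} (H S : set G) : Prop :=
  S `<=` H /\ gen S = H /\ (forall x y, S x -> S y -> S (x - y *+ 2)).

Definition pointed_refl_subspace {G : zmodType} (H S : set G) : Prop :=
  sym_refl_subspace H S /\ S 0.

Definition free_finite_rank {G : zmodType} (H : set G) : Prop :=
  exists (n : nat) (b : 'I_n -> G),
    (forall i, H (b i)) /\
    (forall x, H x -> exists c : 'I_n -> int, x = \sum_(i < n) b i *~ c i) /\
    (forall c : 'I_n -> int, \sum_(i < n) b i *~ c i = 0 -> forall i, c i = 0).

Definition semilattice {G : zmodType} (H S : set G) : Prop :=
  free_finite_rank H /\ pointed_refl_subspace H S.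

Definition torsion_free (G : zmodType) : Prop :=
  forall (x : G) (n : nat), (0 < n)%N -> x *+ n = 0 -> x = 0.

Definition directed_family {I : Type} {G : Type} (D : set I) (F : I -> set G) : Prop :=
  D !=set0 /\
  forall i j, D i -> D j -> exists2 k, D k & F i `<=` F k /\ F j `<=` F k.

Definition direct_union {I : Type} {G : Type} (C : set G) (D : set I) (F : I -> set G) : Prop :=
  directed_family D F /\ C = \bigcup_(i in D) F i.

Definition S_of {G : zmodType} (S T : set G) : set G := S `&` gen T.

(* Main.v *)
Require Import Defs.
From HB Require Import structures.
From mathcomp Require Import all_boot all_order all_algebra.
From mathcomp Require Import boolp classical_sets cardinality.
Import GRing.Theory Num.Theory.
Local Open Scope ring_scope.
Local Open Scope classical_set_scope.
Import GRing.Theory Num.Theory.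

Lemma gen_add (G : zmodType) (X : set G) x y : gen X x -> gen X y -> gen X (x + y).
Proof.
move=> hx hy; have -> : x + y = x - (0 - y) by rewrite sub0r opprK.
by apply: gen_sub => //; apply: gen_sub => //; apply: gen_zero.
Qed.

Lemma gen_opp (G : zmodType) (X : set G) x : gen X x -> gen X (- x).
Proof. by move=> hx; rewrite -sub0r; apply: gen_sub => //; apply: gen_zero. Qed.

Lemma gen_mulrz (G : zmodType) (X : set G) x z : gen X x -> gen X (x *~ z).
Proof.
move=> hx; case: z => n.
  elim: n => [|n IH]; first exact: gen_zero.
  by rewrite -pmulrn mulrS; apply: gen_add; rewrite // pmulrn.
rewrite NegzE mulrNz; apply: gen_opp; elim: n => [|n IH]; first by rewrite mulr1z.
by rewrite -pmulrn mulrS; apply: gen_add; rewrite // pmulrn.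
Qed.

Lemma gen_sum (G : zmodType) (X : set G) k (F : 'I_k -> G) :
  (forall i, gen X (F i)) -> gen X (\sum_i F i).
Proof.
move=> h; apply: (big_ind (gen X)); [exact: gen_zero| exact: gen_add|].
by move=> i _; apply: h.
Qed.

Lemma gen_min (G : zmodType) (X Y : set G) : X `<=` gen Y -> gen X `<=` gen Y.
Proof.
move=> h x; elim => [z /h //| |a b _ ha _ hb]; first exact: gen_zero.
exact: gen_sub.
Qed.

Lemma gen_mono (G : zmodType) (X Y : set G) : X `<=` Y -> gen X `<=` gen Y.
Proof. by move=> h; apply: gen_min => x /h; apply: gen_base. Qed.

Definition indep (G : zmodType) k (b : 'I_k -> G) :=
  forall c : 'I_k -> int, \sum_(i < k) b i *~ c i = 0 -> forall i, c i = 0.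

Arguments indep {G k}.

Lemma gen_range_sum (G : zmodType) k (b : 'I_k -> G) x :
  gen (range b) x -> exists c : 'I_k -> int, x = \sum_(i < k) b i *~ c i.
Proof.
elim => [z [j _ <-]| |a a' _ [c ->] _ [c' ->]].
- exists (fun i => (i == j)%:Z); rewrite (bigD1 j) //= eqxx big1 ?addr0 //.
  by move=> i /negbTE ->; rewrite mulr0z.
- by exists (fun _ => 0); rewrite big1 // => i _; rewrite mulr0z.
- exists (fun i => c i - c' i); rewrite -sumrB; apply: eq_bigr => i _.
  by rewrite mulrzBr.
Qed.
Lemma zmod_aux (G : zmodType) (A B R : G) : R = A - B - (A - (B + R)).
Proof. by rewrite opprB addrC -addrA addKr addrAC subrr add0r. Qed.

Lemma euclid (G : zmodType) : torsion_free G -> forall m k (b : 'I_k -> G) t (c : 'I_k -> int),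
  (0 < m)%N -> indep b -> t *+ m = \sum_i b i *~ c i ->
  exists k' (b' : 'I_k' -> G), indep b' /\ gen (range b') = gen (t |` range b).
Proof.
move=> tf m; elim/ltn_ind: m => m IH k b t c m0 ib ht.
case: (pselect (forall i, (m%:Z %| c i)%Z)) => [hdv|].
  have tE : t = \sum_i b i *~ (c i %/ m)%Z.
    apply/eqP; rewrite -subr_eq0; apply/eqP; apply: (tf _ m m0).
    rewrite mulrnBl ht -sumrMnl; apply/eqP; rewrite subr_eq0; apply/eqP.
    by apply: eq_bigr => i _; rewrite pmulrn -mulrzA divzK.
  exists k, b; split => //; apply/seteqP; split; apply: gen_min.
    by move=> x hx; apply: gen_base; right.
  move=> x [->|hx]; last exact: gen_base.
  by rewrite tE; apply: gen_sum => i; apply: gen_mulrz; apply: gen_base; exists i.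
move/existsNP => [j hj].
pose q := (c j %/ m)%Z; pose r := (c j %% m)%Z.
have mn0 : m%:Z != 0 by rewrite eqz_nat -lt0n.
have r0 : 0 <= r := modz_ge0 _ mn0.
have rm : r < m%:Z by apply: ltz_pmod; rewrite ltz_nat.
have rn0 : r != 0 by apply/eqP => /dvdz_mod0P.
have cjE : c j = q * m%:Z + r := divz_eq (c j) m.
clearbody q r.
have rE : r = (`|r|%N)%:Z by rewrite gez0_abs.
have r'0 : (0 < `|r|)%N by rewrite absz_gt0.
have r'm : (`|r| < m)%N by rewrite -ltz_nat -rE.
pose t' := t - b j *~ q.
pose b'' := fun i => if i == j then t' else b i.
have rel : b j *+ `|r|%N = \sum_i b'' i *~ (if i == j then m%:Z else - c i).
  rewrite (bigD1 j) //= /b'' eqxx.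
  rewrite (eq_bigr (fun i => - (b i *~ c i))); last first.
    by move=> i /negbTE ->; rewrite mulrNz.
  rewrite sumrN.
  have := ht; rewrite (bigD1 j) //= => ht'.
  have -> : \sum_(i < k | i != j) b i *~ c i = t *+ m - b j *~ c j.
    by rewrite ht' addrC addrK.
  rewrite pmulrn -rE /t' mulrzBl -pmulrn.
  rewrite [c j]cjE mulrzDr mulrzA.
  exact: zmod_aux.
have ib'' : indep b''.
  move=> e he.
  pose e'' := fun i => if i == j then - (e j * q) else e i.
  have star : \sum_i b'' i *~ e i = \sum_i b i *~ e'' i + t *~ e j.
    have e''j : e'' j = - (e j * q) by rewrite /e'' eqxx.
    rewrite (bigD1 j) //= [X in _ = X + _](bigD1 j) //= e''j /b'' eqxx.
    rewrite (eq_bigr (fun i => b i *~ e'' i)); last first.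
      by move=> i /negbTE hi; rewrite /e'' hi.
    rewrite /t' mulrzBl -mulrzA mulrNz (mulrC (e j)) [RHS]addrAC.
    by rewrite [_ + t *~ _]addrC.
  pose f := fun i => e'' i * m%:Z + e j * c i.
  have hf : \sum_i b i *~ f i = 0.
    rewrite /f (eq_bigr (fun i => b i *~ e'' i *~ m%:Z + b i *~ c i *~ e j)); last first.
      by move=> i _; rewrite /f mulrzDr !mulrzA [b i *~ e j *~ _]mulrzAC.
    rewrite big_split /= -!mulrz_suml -ht.
    have -> : \sum_i b i *~ e'' i = - (t *~ e j).
      by apply/eqP; rewrite -subr_eq0 opprK -star he.
    by rewrite -pmulrn mulNrn pmulrn pmulrn mulrzAC addNr.
  have fj := ib _ hf j.
  have ej0 : e j = 0.
    move: fj; rewrite /f /e'' eqxx mulNr -mulrA cjE mulrDr addKr.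
    by move=> /eqP; rewrite mulf_eq0 (negbTE rn0) orbF => /eqP.
  move=> i; have := ib _ hf i; rewrite /f /e'' ej0 !mul0r addr0.
  case: eqP => [-> _ //|_] /eqP; rewrite mulf_eq0 (negbTE mn0) orbF => /eqP //.
have [k' [b' [ib' gE]]] := IH _ r'm _ b'' (b j) _ r'0 ib'' rel.
exists k', b'; split => //; rewrite gE; apply/seteqP; split; apply: gen_min.
  move=> x [->|[i _ <-]]; first by apply: gen_base; right; exists j.
  rewrite /b''; case: eqP => _; last by apply: gen_base; right; exists i.
  apply: gen_sub; first by apply: gen_base; left.
  by apply: gen_mulrz; apply: gen_base; right; exists j.
move=> x [->|[i _ <-]].
  have -> : t = t' + b j *~ q by rewrite /t' subrK.
  apply: gen_add; first by apply: gen_base; right; exists j => //; rewrite /b'' eqxx.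
  by apply: gen_mulrz; apply: gen_base; left.
case: (eqVneq i j) => [->|hij]; first by apply: gen_base; left.
by apply: gen_base; right; exists i => //; rewrite /b'' (negbTE hij).
Qed.
Lemma extend (G : zmodType) : torsion_free G -> forall k (b : 'I_k -> G) t, indep b ->
  exists k' (b' : 'I_k' -> G), indep b' /\ gen (range b') = gen (t |` range b).
Proof.
move=> tf k b t ib.
case: (pselect (forall (c : 'I_k -> int) a, \sum_i b i *~ c i + t *~ a = 0 -> a = 0)) => [h|].
  pose b' := fun i : 'I_k.+1 => oapp b t (insub (val i) : option 'I_k).
  have bw : forall i : 'I_k, b' (widen_ord (leqnSn k) i) = b i.
    move=> i; rewrite /b' /= (insubT (fun x => x < k)%N (ltn_ord i)) /=.
    by congr b; apply: val_inj.
  have bm : b' ord_max = t by rewrite /b' insubF //= ltnn.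
  exists k.+1, b'; split.
    move=> e; rewrite big_ord_recr /= bm.
    rewrite (eq_bigr (fun i => b i *~ e (widen_ord (leqnSn k) i))); last first.
      by move=> i _; rewrite bw.
    move=> he; have em := h _ _ he.
    rewrite em mulr0z addr0 in he; have ew := ib _ he.
    move=> i; case: (unliftP ord_max i) => [j ->|-> //].
    have -> : lift ord_max j = widen_ord (leqnSn k) j by apply: val_inj; rewrite /= /bump leqNgt ltn_ord.
    exact: ew.
  apply/seteqP; split; apply: gen_min.
    move=> x [i _ <-]; rewrite /b'; case: insub => [j|] /=; apply: gen_base.
      by right; exists j.
    by left.
  move=> x [->|[i _ <-]]; [rewrite -bm | rewrite -bw]; apply: gen_base; eexists => //.
move/existsNP => [c /existsNP [a /not_implyP [hs ha]]].
case: a hs ha => n hs ha.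
  case: n hs ha => [|n] hs ha; first by [].
  apply: (@euclid G tf n.+1 k b t (fun i => - c i)) => //.
  rewrite (eq_bigr (fun i => - (b i *~ c i))); last by move=> i _; rewrite mulrNz.
  rewrite sumrN pmulrn; apply/eqP; rewrite -addr_eq0 addrC; exact/eqP.
apply: (@euclid G tf n.+1 k b t c) => //.
move: hs; rewrite NegzE mulrNz; move/eqP; rewrite subr_eq0 => /eqP ->.
by rewrite pmulrn.
Qed.

Lemma free_seq (G : zmodType) : torsion_free G -> forall s : seq G,
  exists k (b : 'I_k -> G), indep b /\ gen [set` s] = gen (range b).
Proof.
move=> tf; elim => [|t s [k [b [ib gE]]]].
  exists 0%N, (fun _ => 0); split; first by move=> c _ [].
  apply/seteqP; split; apply: gen_min; first by move=> x /=; rewrite in_nil.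
  by move=> x [[]].
have [k' [b' [ib' gE']]] := @extend G tf _ _ t ib.
exists k', b'; split => //; rewrite gE'.
apply/seteqP; split; apply: gen_min.
  move=> x /=; rewrite inE => /orP [/eqP ->|hx]; first by apply: gen_base; left.
  have : gen [set` s] x by apply: gen_base.
  by rewrite gE; apply: gen_mono => y hy; right.
move=> x [->|hx]; first by apply: gen_base; rewrite /= inE eqxx.
have : gen (range b) x by apply: gen_base.
by rewrite -gE; apply: gen_mono => y /= ys; rewrite inE ys orbT.
Qed.

Lemma free_fin (G : zmodType) : torsion_free G -> forall T : set G, finite_set T ->
  free_finite_rank (gen T).
Proof.
move=> tf T /finite_seqP [s ->].
have [k [b [ib gE]]] := @free_seq G tf s.
exists k, b; rewrite gE; split; [|split].
- by move=> i; apply: gen_base; exists i.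
- by move=> x /gen_range_sum.
- exact: ib.
Qed.

Theorem lemma1p2 (G : zmodType) (S : set G) :
  pointed_refl_subspace setT S ->
  (* (i)(a) *)
  (forall T : set G, T `<=` S -> pointed_refl_subspace (gen T) (S_of S T)) /\
  (torsion_free G ->
     forall T : set G, T `<=` S -> finite_set T -> semilattice (gen T) (S_of S T)) /\
  (* (i)(b) *)
  direct_union S [set T : set G | finite_set T /\ T `<=` S] (S_of S) /\
  (* (ii) *)
  (forall Fam : set (set G),
     directed_family Fam id ->
     (forall S' : set G, Fam S' -> pointed_refl_subspace (gen S') S') ->
     setT = \bigcup_(S' in Fam) gen S' ->
     pointed_refl_subspace setT (\bigcup_(S' in Fam) S')).
Proof.
move=> [[_ [genS closS]] S0].
have partA : forall T : set G, T `<=` S -> pointed_refl_subspace (gen T) (S_of S T).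
  move=> T TS.
  have TST : T `<=` S_of S T by move=> x hx; split; [exact: TS | exact: gen_base].
  split; [split; [by move=> x []|split] |].
  - apply/seteqP; split; last exact: gen_mono.
    by apply: gen_min => x [].
  - move=> x y [Sx gx] [Sy gy]; split; first exact: closS.
    by apply: gen_sub => //; rewrite GRing.mulr2n; apply: gen_add.
  - by split => //; apply: gen_zero.
split; first exact: partA.
split.
  by move=> tf T TS fT; split; [exact: free_fin | exact: partA].
split.
  split.
    split; first by exists set0; split; [exact: finite_set0 | exact: sub0set].
    move=> T1 T2 [f1 s1] [f2 s2]; exists (T1 `|` T2).
      by split; [rewrite finite_setU | move=> x [/s1|/s2]].
    by split; move=> x [Sx gx]; split => //; apply: gen_mono gx => y; [left|right].
  apply/seteqP; split.
    move=> x Sx; exists [set x]; first by split; [exact: finite_set1| move=> y ->].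
    by split => //; apply: gen_base.
  by move=> x [T _ [Sx _]].
move=> Fam [[S0' F0] dir] hF cover.
split; last by exists S0' => //; exact: (hF _ F0).2.
split; first by [].
split.
  apply/seteqP; split; first by [].
  move=> x _; have : (\bigcup_(S' in Fam) gen S') x by rewrite -cover.
  case=> S' FS' gx; apply: gen_mono gx => y hy; by exists S'.
move=> x y [S1 F1 x1] [S2 F2 y2]; have [S3 F3 [h1 h2]] := dir _ _ F1 F2.
exists S3 => //; have [[_ [_ cl]] _] := hF _ F3.
exact: cl (h1 _ x1) (h2 _ y2).
Qed.
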